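(* Let $A,B$ be non-empty sets, $I$ a non-empty index set, $\{V_i\}_{i\in I}\subseteq\mathcal R(A)$, $\{W_i\}_{i\in I}\subseteq\mathcal R(B)$, ${\cal A}=(A,I,V_i)$, ${\cal B}=(B,I,W_i)$, let $R\in\mathcal R(A,B)$ be a uniform fuzzy relation and $Z\in\mathcal R(A,B)$ with $R\le Z$. Then $R$ is a solution to $WL^{2\text{-}5}(A,B,I,V_i,W_i,Z)$ if and only if all of the following hold: (i) $E_A^R$ is a solution to $WL^{1\text{-}4}(A,I,V_i,Z\circ Z^{-1})$; (ii) $E_B^R$ is a solution to $WL^{1\text{-}5}(B,I,W_i,Z^{-1}\circ Z)$; (iii) $\widetilde R$ is an isomorphism of the quotient fuzzy relational systems ${\cal A}/E_A^R$ and ${\cal B}/E_B^R$.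
   Context: $\mathcal L=(L,\wedge,\vee,\otimes,\to,0,1)$ is a complete residuated lattice; $x\leftrightarrow y=(x\to y)\wedge(y\to x)$. For non-empty sets $X,Y$, $\mathcal R(X,Y)$ is the set of fuzzy relations $X\times Y\to L$, $\mathcal R(X)=\mathcal R(X,X)$, ordered pointwise; $R^{-1}(y,x)=R(x,y)$; $(R\circ S)(x,t)=\bigvee_{y}R(x,y)\otimes S(y,t)$. For $R\in\mathcal R(A,B)$: kernel $E_A^R(a_1,a_2)=\bigwedge_{b\in B}R(a_1,b)\leftrightarrow R(a_2,b)$; co-kernel $E_B^R(b_1,b_2)=\bigwedge_{a\in A}R(a,b_1)\leftrightarrow R(a,b_2)$ (both fuzzy equivalences). $R$ is uniform if every $a$ has some $b$ with $R(a,b)=1$, every $b$ has some $a$ with $R(a,b)=1$, and $R(a,b_1)\otimes R(a,b_2)\le E_B^R(b_1,b_2)$ for all $a,b_1,b_2$. For uniform $R$, with $E=E_A^R$, $F=E_B^R$, the map $\widetilde R:A/E\to B/F$, $\widetilde R(E_a)=F_{\psi(a)}$, where $\psi:A\to B$ is any function with $R(a,\psi(a))=1$ for all $a$, is well defined and bijective. For a fuzzy equivalence $E$ on $X$ (reflexive, symmetric, $E(x,y)\otimes E(y,z)\le E(x,z)$): $E_x(y)=E(x,y)$, $X/E=\{E_x\}$; the quotient of ${\cal X}=(X,I,V_i)$ is ${\cal X}/E=(X/E,I,V_i^{X/E})$ with $V_i^{X/E}(E_{x_1},E_{x_2})=(E\circ V_i\circ E)(x_1,x_2)$. An isomorphism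 of $(X,I,V_i)$ and $(Y,I,W_i)$ is a bijection $\varphi$ with $V_i(x_1,x_2)=W_i(\varphi(x_1),\varphi(x_2))$ for all $x_1,x_2$, $i$. $WL^{2\text{-}5}(A,B,I,V_i,W_i,Z)$ (unknown $U\in\mathcal R(A,B)$): $V_i\circ U=U\circ W_i$ for all $i$, and $U\le Z$. For $\{V_i\}\subseteq\mathcal R(X)$, $W\in\mathcal R(X)$, unknown $U\in\mathcal R(X)$: $WL^{1\text{-}4}(X,I,V_i,W)$: $U\circ V_i\le V_i\circ U$ and $U^{-1}\circ V_i\le V_i\circ U^{-1}$ for all $i$, $U\le W$, $U^{-1}\le W$; $WL^{1\text{-}5}(X,I,V_i,W)$: $V_i\circ U\le U\circ V_i$ and $V_i\circ U^{-1}\le U^{-1}\circ V_i$ for all $i$, $U\le W$, $U^{-1}\le W$. *)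

(* Defs.v *)
From Stdlib Require Import ClassicalEpsilon.

Record CRL := {
  car :> Type;
  le : car -> car -> Prop;
  meet : car -> car -> car;
  join : car -> car -> car;
  otimes : car -> car -> car;
  res : car -> car -> car;
  zero : car;
  one : car;
  sup : (car -> Prop) -> car;
  inf : (car -> Prop) -> car;
  le_refl : forall x, le x x;
  le_trans : forall x y z, le x y -> le y z -> le x z;
  le_antisym : forall x y, le x y -> le y x -> x = y;
  sup_ub : forall (S : car -> Prop) x, S x -> le x (sup S);
  sup_least : forall (S : car -> Prop) y, (forall x, S x -> le x y) -> le (sup S) y;
  inf_lb : forall (S : car -> Prop) x, S x -> le (inf S) x;
  inf_greatest : forall (S : car -> Prop) y, (forall x, S x -> le y x) -> le y (inf S);
  meet_glb : forall x y z, le z (meet x y) <-> (le z x /\ le z y);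
  join_lub : forall x y z, le (join x y) z <-> (le x z /\ le y z);
  zero_least : forall x, le zero x;
  one_greatest : forall x, le x one;
  otimes_assoc : forall x y z, otimes x (otimes y z) = otimes (otimes x y) z;
  otimes_comm : forall x y, otimes x y = otimes y x;
  otimes_one : forall x, otimes x one = x;
  adjoint : forall x y z, le (otimes x y) z <-> le x (res y z)
}.

Arguments le {c}.
Arguments meet {c}.
Arguments join {c}.
Arguments otimes {c}.
Arguments res {c}.
Arguments zero {c}.
Arguments one {c}.
Arguments sup {c}.
Arguments inf {c}.

Section FuzzyRel.
Context {L : CRL}.

Definition bires (x y : L) : L := meet (res x y) (res y x).

Definition Rel (X Y : Type) := X -> Y -> L.

Definition rel_le {X Y} (R S : Rel X Y) : Prop := forall x y, le (R x y) (S x y).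

Definition inv {X Y} (R : Rel X Y) : Rel Y X := fun y x => R x y.

Definition comp {X Y T} (R : Rel X Y) (S : Rel Y T) : Rel X T :=
  fun x t => sup (fun v => exists y, v = otimes (R x y) (S y t)).

Definition kernel {A B} (R : Rel A B) : Rel A A :=
  fun a1 a2 => inf (fun v => exists b, v = bires (R a1 b) (R a2 b)).
Definition cokernel {A B} (R : Rel A B) : Rel B B :=
  fun b1 b2 => inf (fun v => exists a, v = bires (R a b1) (R a b2)).

Definition uniform {A B} (R : Rel A B) : Prop :=
  (forall a, exists b, R a b = one) /\
  (forall b, exists a, R a b = one) /\
  (forall a b1 b2, le (otimes (R a b1) (R a b2)) (cokernel R b1 b2)).

Definition quot {X} (E : Rel X X) := { f : X -> L | exists x, f = E x }.
Definition qclass {X} (E : Rel X X) (x : X) : quot E :=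
  exist (fun f => exists x, f = E x) (E x) (ex_intro _ x eq_refl).
Definition qrep {X} {E : Rel X X} (c : quot E) : X :=
  proj1_sig (constructive_indefinite_description _ (proj2_sig c)).
Definition qrel {X I} (E : Rel X X) (V : I -> Rel X X) (i : I) : Rel (quot E) (quot E) :=
  fun c1 c2 => comp (comp E (V i)) E (qrep c1) (qrep c2).

Definition Rtilde {A B} (E : Rel A A) (F : Rel B B) (psi : A -> B) : quot E -> quot F :=
  fun c => qclass F (psi (qrep c)).

Definition is_iso {X Y I} (V : I -> Rel X X) (W : I -> Rel Y Y) (phi : X -> Y) : Prop :=
  (forall x1 x2, phi x1 = phi x2 -> x1 = x2) /\
  (forall y, exists x, phi x = y) /\
  (forall i x1 x2, V i x1 x2 = W i (phi x1) (phi x2)).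

Definition WL25 {A B I} (V : I -> Rel A A) (W : I -> Rel B B) (Z : Rel A B) (U : Rel A B) : Prop :=
  (forall i, comp (V i) U = comp U (W i)) /\ rel_le U Z.

Definition WL14 {X I} (V : I -> Rel X X) (W : Rel X X) (U : Rel X X) : Prop :=
  (forall i, rel_le (comp U (V i)) (comp (V i) U) /\
             rel_le (comp (inv U) (V i)) (comp (V i) (inv U))) /\
  rel_le U W /\ rel_le (inv U) W.

Definition WL15 {X I} (V : I -> Rel X X) (W : Rel X X) (U : Rel X X) : Prop :=
  (forall i, rel_le (comp (V i) U) (comp U (V i)) /\
             rel_le (comp (V i) (inv U)) (comp (inv U) (V i))) /\
  rel_le U W /\ rel_le (inv U) W.

End FuzzyRel.

(* Main.v *)
Require Import Defs.
From Stdlib Require Import ClassicalEpsilon FunctionalExtensionality ProofIrrelevance PropExtensionality.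

Arguments le_refl {c}. Arguments le_trans {c}. Arguments le_antisym {c}. Arguments sup_ub {c}.
Arguments sup_least {c}. Arguments inf_lb {c}. Arguments inf_greatest {c}. Arguments meet_glb {c}.
Arguments join_lub {c}. Arguments zero_least {c}. Arguments one_greatest {c}. Arguments otimes_assoc {c}.
Arguments otimes_comm {c}. Arguments otimes_one {c}. Arguments adjoint {c}.

Lemma lantisym {L : CRL} (x y : L) : le x y -> le y x -> x = y.
Proof. apply le_antisym. Qed.
Lemma ltrans {L : CRL} (x y z : L) : le x y -> le y z -> le x z.
Proof. apply le_trans. Qed.
Lemma lrefl {L : CRL} (x : L) : le x x.
Proof. apply le_refl. Qed.
Lemma adj1 {L : CRL} (x y z : L) : le (otimes x y) z -> le x (res y z).
Proof. apply adjoint. Qed.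
Lemma adj2 {L : CRL} (x y z : L) : le x (res y z) -> le (otimes x y) z.
Proof. apply adjoint. Qed.

Lemma one_otimes {L : CRL} (x : L) : otimes one x = x.
Proof. rewrite otimes_comm; apply otimes_one. Qed.

Lemma otimes_mono_l {L : CRL} (x y z : L) : le x y -> le (otimes x z) (otimes y z).
Proof. intro H. apply adj2. apply (ltrans _ y); auto. apply adj1, lrefl. Qed.

Lemma otimes_mono_r {L : CRL} (x y z : L) : le x y -> le (otimes z x) (otimes z y).
Proof. intro H. rewrite (otimes_comm z x), (otimes_comm z y). now apply otimes_mono_l. Qed.

Lemma otimes_mono {L : CRL} (x y z w : L) : le x y -> le z w -> le (otimes x z) (otimes y w).
Proof.
  intros; apply (ltrans _ (otimes y z)); [apply otimes_mono_l|apply otimes_mono_r]; auto.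
Qed.

Lemma otimes_sup_le_l {L : CRL} (S : L -> Prop) (x y : L) :
  (forall s, S s -> le (otimes s x) y) -> le (otimes (sup S) x) y.
Proof. intro H. apply adj2. apply sup_least. intros s Hs. apply adj1. auto. Qed.

Lemma otimes_sup_le_r {L : CRL} (S : L -> Prop) (x y : L) :
  (forall s, S s -> le (otimes x s) y) -> le (otimes x (sup S)) y.
Proof.
  intro H. rewrite otimes_comm. apply otimes_sup_le_l. intros s Hs. rewrite otimes_comm; auto.
Qed.

Lemma res_one_le {L : CRL} (x : L) : le (res one x) x.
Proof.
  apply (ltrans _ (otimes (res one x) one)). rewrite otimes_one; apply lrefl.
  apply adj2, lrefl.
Qed.

Lemma meet_le_l {L : CRL} (x y : L) : le (meet x y) x.
Proof. exact (proj1 (proj1 (meet_glb x y (meet x y)) (lrefl _))). Qed.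
Lemma meet_le_r {L : CRL} (x y : L) : le (meet x y) y.
Proof. exact (proj2 (proj1 (meet_glb x y (meet x y)) (lrefl _))). Qed.

Lemma bires_refl {L : CRL} (x : L) : bires x x = one.
Proof.
  apply lantisym. apply one_greatest. apply meet_glb; split; apply adj1; rewrite one_otimes; apply lrefl.
Qed.

Lemma bires_sym {L : CRL} (x y : L) : bires x y = bires y x.
Proof.
  unfold bires; apply lantisym; apply meet_glb; split; (apply meet_le_r || apply meet_le_l).
Qed.

Lemma bires_trans {L : CRL} (x y z : L) : le (otimes (bires x y) (bires y z)) (bires x z).
Proof.
  unfold bires. apply meet_glb; split; apply adj1.
  - rewrite (otimes_comm (meet (res x y) (res y x))), <- otimes_assoc.
    apply (ltrans _ (otimes (meet (res y z) (res z y)) y)).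
    + apply otimes_mono_r. apply adj2, meet_le_l.
    + apply adj2, meet_le_l.
  - rewrite <- otimes_assoc.
    apply (ltrans _ (otimes (meet (res x y) (res y x)) y)).
    + apply otimes_mono_r. apply adj2, meet_le_r.
    + apply adj2, meet_le_r.
Qed.

Definition Rrefl {L : CRL} {X} (Q : @Rel L X X) := forall x, Q x x = one.
Definition Rsym {L : CRL} {X} (Q : @Rel L X X) := forall x y, Q x y = Q y x.
Definition Rtrans {L : CRL} {X} (Q : @Rel L X X) := forall x y z, le (otimes (Q x y) (Q y z)) (Q x z).

Lemma comp_le {L : CRL} {X Y T} (R : @Rel L X Y) (S : @Rel L Y T) x t v :
  (forall y, le (otimes (R x y) (S y t)) v) -> le (comp R S x t) v.
Proof. intro H. unfold comp; apply sup_least; intros u [y ->]; auto. Qed.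

Lemma le_comp {L : CRL} {X Y T} (R : @Rel L X Y) (S : @Rel L Y T) x y t v :
  le v (otimes (R x y) (S y t)) -> le v (comp R S x t).
Proof. intro H. apply (ltrans _ (otimes (R x y) (S y t))); auto. apply sup_ub; exists y; reflexivity. Qed.

Lemma comp_assoc {L : CRL} {X Y Z T} (R : @Rel L X Y) (S : @Rel L Y Z) (U : @Rel L Z T) :
  comp (comp R S) U = comp R (comp S U).
Proof.
  extensionality x; extensionality t. apply lantisym.
  - apply comp_le; intro z. apply otimes_sup_le_l. intros s [y ->].
    rewrite <- otimes_assoc. apply (le_comp _ _ _ y). apply otimes_mono_r.
    apply (le_comp _ _ _ z). apply lrefl.
  - apply comp_le; intro y. apply otimes_sup_le_r. intros s [z ->].
    rewrite otimes_assoc. apply (le_comp _ _ _ z). apply otimes_mono_l.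
    apply (le_comp _ _ _ y). apply lrefl.
Qed.

Lemma comp_mono {L : CRL} {X Y T} (R R' : @Rel L X Y) (S S' : @Rel L Y T) :
  rel_le R R' -> rel_le S S' -> rel_le (comp R S) (comp R' S').
Proof.
  intros H1 H2 x t. apply comp_le; intro y. apply (le_comp _ _ _ y). apply otimes_mono; auto.
Qed.

Lemma rel_le_refl {L : CRL} {X Y} (R : @Rel L X Y) : rel_le R R.
Proof. intros x y; apply lrefl. Qed.
Lemma rel_le_trans {L : CRL} {X Y} (R S T : @Rel L X Y) : rel_le R S -> rel_le S T -> rel_le R T.
Proof. intros H1 H2 x y; eapply ltrans; eauto. Qed.
Lemma rel_antisym {L : CRL} {X Y} (R S : @Rel L X Y) : rel_le R S -> rel_le S R -> R = S.
Proof. intros; extensionality x; extensionality y; apply lantisym; auto. Qed.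
Lemma inv_mono {L : CRL} {X Y} (R S : @Rel L X Y) : rel_le R S -> rel_le (inv R) (inv S).
Proof. intros H x y; apply H. Qed.
Lemma sym_inv {L : CRL} {X} (Q : @Rel L X X) : Rsym Q -> inv Q = Q.
Proof. intro H; extensionality x; extensionality y; apply H. Qed.

Lemma comp_refl_l {L : CRL} {X Y} (Q : @Rel L X X) (S : @Rel L X Y) : Rrefl Q -> rel_le S (comp Q S).
Proof. intros H x t. apply (le_comp _ _ _ x). rewrite H, one_otimes. apply lrefl. Qed.
Lemma comp_refl_r {L : CRL} {X Y} (S : @Rel L X Y) (Q : @Rel L Y Y) : Rrefl Q -> rel_le S (comp S Q).
Proof. intros H x t. apply (le_comp _ _ _ t). rewrite H, otimes_one. apply lrefl. Qed.
Lemma comp_idem {L : CRL} {X} (Q : @Rel L X X) : Rrefl Q -> Rtrans Q -> comp Q Q = Q.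
Proof.
  intros Hr Ht. apply rel_antisym.
  - intros x z; apply comp_le; intro y; apply Ht.
  - apply comp_refl_l; auto.
Qed.
Lemma row_eq {L : CRL} {X} (Q : @Rel L X X) : Rsym Q -> Rtrans Q -> forall x y, Q x y = one -> Q x = Q y.
Proof.
  intros Hs Ht x y H. extensionality z. apply lantisym.
  - rewrite <- (one_otimes (Q x z)), <- H, (Hs x y). apply Ht.
  - rewrite <- (one_otimes (Q y z)), <- H. apply Ht.
Qed.

Lemma cok_refl {L : CRL} {A B} (R : @Rel L A B) : Rrefl (cokernel R).
Proof.
  intro b. apply lantisym. apply one_greatest. apply inf_greatest. intros v [a ->].
  rewrite bires_refl; apply lrefl.
Qed.
Lemma cok_sym {L : CRL} {A B} (R : @Rel L A B) : Rsym (cokernel R).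
Proof.
  intros b1 b2. apply lantisym; apply inf_greatest; intros v [a ->]; rewrite bires_sym;
  apply inf_lb; exists a; reflexivity.
Qed.
Lemma cok_trans {L : CRL} {A B} (R : @Rel L A B) : Rtrans (cokernel R).
Proof.
  intros b1 b2 b3. apply inf_greatest. intros v [a ->].
  apply (ltrans _ (otimes (bires (R a b1) (R a b2)) (bires (R a b2) (R a b3)))).
  - apply otimes_mono; apply inf_lb; exists a; reflexivity.
  - apply bires_trans.
Qed.

Lemma inf_bires {L : CRL} {X} (Q : @Rel L X X) : Rrefl Q -> Rsym Q -> Rtrans Q ->
  forall x y, inf (fun v => exists b, v = bires (Q x b) (Q y b)) = Q x y.
Proof.
  intros Hr Hs Ht x y. apply lantisym.
  - apply (ltrans _ (bires (Q x y) (Q y y))). apply inf_lb; exists y; reflexivity.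
    rewrite Hr. apply (ltrans _ (res one (Q x y))). apply meet_le_r. apply res_one_le.
  - apply inf_greatest. intros v [b ->]. apply meet_glb; split; apply adj1.
    + rewrite (Hs x y). apply Ht.
    + apply Ht.
Qed.

Lemma qrep_spec {L : CRL} {X} (E : @Rel L X X) (c : quot E) : proj1_sig c = E (qrep c).
Proof. unfold qrep. destruct (constructive_indefinite_description _ _) as [x Hx]. simpl. exact Hx. Qed.
Lemma qrep_qclass {L : CRL} {X} (E : @Rel L X X) x : E x = E (qrep (qclass E x)).
Proof. exact (qrep_spec E (qclass E x)). Qed.
Lemma quot_eq {L : CRL} {X} (E : @Rel L X X) (c1 c2 : quot E) : proj1_sig c1 = proj1_sig c2 -> c1 = c2.
Proof. destruct c1 as [f1 p1], c2 as [f2 p2]; simpl; intro H; subst f2. f_equal. apply proof_irrelevance. Qed.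

Lemma eve_inv {L : CRL} {X} (E : @Rel L X X) (V : @Rel L X X) : Rsym E -> forall x1 x2 y1 y2,
  E x1 = E y1 -> E x2 = E y2 -> comp (comp E V) E x1 x2 = comp (comp E V) E y1 y2.
Proof.
  intros Hs x1 x2 y1 y2 H1 H2.
  assert (HE : comp (comp E V) E = comp (comp E V) (inv E)) by (rewrite (sym_inv E Hs); reflexivity).
  rewrite HE. unfold comp, inv. cbv beta. rewrite H1, H2. reflexivity.
Qed.



Lemma kfacts {L : CRL} {A B} (R : @Rel L A B) (E : @Rel L A A) (F : @Rel L B B) (psi : A -> B)
  (Er : Rrefl E) (Fr : Rrefl F) (Fs : Rsym F) (Ft : Rtrans F)
  (HR : forall a b, R a b = F (psi a) b) (HE : forall a1 a2, E a1 a2 = F (psi a1) (psi a2))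
  (Hsurj : forall b, exists a, F (psi a) b = one) :
  comp (inv R) R = F /\ comp R (inv R) = E /\ comp E R = R /\ comp R F = R.
Proof.
  split; [|split; [|split]]; apply rel_antisym.
  - intros b1 b2; apply comp_le; intro a; unfold inv; cbv beta.
    rewrite !HR, (Fs (psi a) b1); apply Ft.
  - intros b1 b2; destruct (Hsurj b1) as [a Ha]; apply (le_comp _ _ _ a); unfold inv; cbv beta.
    rewrite !HR, Ha, one_otimes. rewrite (row_eq F Fs Ft _ _ Ha). apply lrefl.
  - intros a1 a2; apply comp_le; intro b; unfold inv; cbv beta.
    rewrite !HR, HE, (Fs (psi a2) b); apply Ft.
  - intros a1 a2; apply (le_comp _ _ _ (psi a2)); unfold inv; cbv beta.
    rewrite !HR, HE, Fr, otimes_one; apply lrefl.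
  - intros a b; apply comp_le; intro a'; rewrite HE, !HR; apply Ft.
  - apply comp_refl_l; auto.
  - intros a b; apply comp_le; intro b'; rewrite !HR; apply Ft.
  - apply comp_refl_r; auto.
Qed.

Lemma Glem {L : CRL} {A B} (R : @Rel L A B) (F : @Rel L B B) (psi : A -> B) (Fs : Rsym F)
  (HR : forall a b, R a b = F (psi a) b) :
  forall (X : @Rel L B B) a1 a2, comp (comp R X) (inv R) a1 a2 = comp (comp F X) F (psi a1) (psi a2).
Proof.
  intros X a1 a2.
  assert (HRf : R = fun a b => F (psi a) b) by (extensionality a; extensionality b; apply HR).
  rewrite HRf. unfold comp, inv. cbv beta.
  assert (Hs : F (psi a2) = fun y => F y (psi a2)) by (extensionality y; apply Fs).
  rewrite Hs. cbv beta. reflexivity.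
Qed.

Lemma core {L : CRL} {A B I} (V : I -> @Rel L A A) (W : I -> @Rel L B B) (R : @Rel L A B)
  (E : @Rel L A A) (F : @Rel L B B) (psi : A -> B)
  (Er : Rrefl E) (Es : Rsym E) (Et : Rtrans E) (Fr : Rrefl F) (Fs : Rsym F) (Ft : Rtrans F)
  (HR : forall a b, R a b = F (psi a) b) (HE : forall a1 a2, E a1 a2 = F (psi a1) (psi a2))
  (Hsurj : forall b, exists a, F (psi a) b = one) :
  (forall i, comp (V i) R = comp R (W i)) <->
  ((forall i, rel_le (comp E (V i)) (comp (V i) E)) /\ (forall i, rel_le (comp (W i) F) (comp F (W i))) /\
   (forall i a1 a2, comp (comp E (V i)) E a1 a2 = comp (comp F (W i)) F (psi a1) (psi a2))).
Proof.
  destruct (kfacts R E F psi Er Fr Fs Ft HR HE Hsurj) as [K1 [K2 [K3 K4]]].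
  pose proof (Glem R F psi Fs HR) as G.
  split.
  - intro H.
    assert (EV_R : forall i, comp (comp E (V i)) R = comp (V i) R).
    { intro i. rewrite (comp_assoc E (V i) R), H, <- (comp_assoc E R (W i)), K3. reflexivity. }
    assert (EVE : forall i, comp (comp E (V i)) E = comp (V i) E).
    { intro i.
      assert (X1 : comp (comp (comp E (V i)) R) (inv R) = comp (comp E (V i)) E)
        by (rewrite (comp_assoc (comp E (V i)) R (inv R)), K2; reflexivity).
      rewrite <- X1, EV_R, (comp_assoc (V i) R (inv R)), K2. reflexivity. }
    assert (FW : forall i, comp F (W i) = comp (inv R) (comp (V i) R)).
    { intro i. rewrite <- K1, (comp_assoc (inv R) R (W i)), <- H. reflexivity. }
    assert (FWF : forall i, comp (comp F (W i)) F = comp F (W i)).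
    { intro i. rewrite FW, (comp_assoc (inv R) (comp (V i) R) F), (comp_assoc (V i) R F), K4.
      reflexivity. }
    split; [|split].
    + intro i. apply (rel_le_trans _ (comp (comp E (V i)) E)).
      apply comp_refl_r; auto. rewrite EVE. apply rel_le_refl.
    + intro i. apply (rel_le_trans _ (comp F (comp (W i) F))).
      apply comp_refl_l; auto. rewrite <- comp_assoc, FWF. apply rel_le_refl.
    + intros i a1 a2. rewrite EVE, <- K2, <- (comp_assoc (V i) R (inv R)), H. apply G.
  - intros [Hev [Hwf HC]] i.
    assert (EVE : comp (comp E (V i)) E = comp (V i) E).
    { apply rel_antisym.
      - apply (rel_le_trans _ (comp (comp (V i) E) E)).
        apply comp_mono; [apply Hev|apply rel_le_refl].
        rewrite comp_assoc, comp_idem; auto. apply rel_le_refl.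
      - rewrite comp_assoc. apply comp_refl_l; auto. }
    assert (FWF : comp (comp F (W i)) F = comp F (W i)).
    { apply rel_antisym.
      - rewrite comp_assoc. apply (rel_le_trans _ (comp F (comp F (W i)))).
        apply comp_mono; [apply rel_le_refl|apply Hwf].
        rewrite <- comp_assoc, comp_idem; auto. apply rel_le_refl.
      - apply comp_refl_r; auto. }
    assert (EVE' : comp (comp E (V i)) E = comp (comp R (W i)) (inv R)).
    { extensionality a1; extensionality a2. rewrite HC. symmetry. apply G. }
    assert (S1 : comp (V i) R = comp (comp (comp R (W i)) (inv R)) R).
    { rewrite <- EVE', EVE, (comp_assoc (V i) E R), K3. reflexivity. }
    rewrite S1, (comp_assoc (comp R (W i)) (inv R) R), K1, (comp_assoc R (W i) F).
    transitivity (comp (comp R F) (comp (W i) F)). { rewrite K4; reflexivity. }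
    rewrite (comp_assoc R F (comp (W i) F)), <- (comp_assoc F (W i) F), FWF,
      <- (comp_assoc R F (W i)), K4. reflexivity.
Qed.

Lemma move_cls {L : CRL} {A B} (E : @Rel L A A) (F : @Rel L B B) (psi : A -> B)
  (Er : Rrefl E) (Fs : Rsym F) (Ft : Rtrans F)
  (HE : forall a1 a2, E a1 a2 = F (psi a1) (psi a2)) :
  forall a a', E a = E a' -> F (psi a) = F (psi a').
Proof.
  intros a a' H. apply (row_eq F Fs Ft). rewrite <- HE, H. apply Er.
Qed.

Theorem theorem7p4 (L : CRL) (A B I : Type)
  (hA : inhabited A) (hB : inhabited B) (hI : inhabited I)
  (V : I -> @Rel L A A) (W : I -> @Rel L B B) (R Z : @Rel L A B)
  (hR : uniform R) (hRZ : rel_le R Z) :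
  WL25 V W Z R <->
  (WL14 V (comp Z (inv Z)) (kernel R) /\
   WL15 W (comp (inv Z) Z) (cokernel R) /\
   (forall psi : A -> B, (forall a, R a (psi a) = one) ->
      is_iso (qrel (kernel R) V) (qrel (cokernel R) W)
             (Rtilde (kernel R) (cokernel R) psi))).
Proof.
  pose proof hR as [H1 [H2 H3]].
  set (psi0 := fun a => proj1_sig (constructive_indefinite_description _ (H1 a))).
  assert (Hpsi0 : forall a, R a (psi0 a) = one).
  { intro a; unfold psi0; destruct (constructive_indefinite_description _ _); simpl; auto. }
  assert (Fr : Rrefl (cokernel R)) by apply cok_refl.
  assert (Fs : Rsym (cokernel R)) by apply cok_sym.
  assert (Ft : Rtrans (cokernel R)) by apply cok_trans.
  assert (Er : Rrefl (kernel R)) by exact (cok_refl (inv R)).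
  assert (Es : Rsym (kernel R)) by exact (cok_sym (inv R)).
  assert (Et : Rtrans (kernel R)) by exact (cok_trans (inv R)).
  assert (Key : forall psi, (forall a, R a (psi a) = one) ->
     (forall a b, R a b = cokernel R (psi a) b) /\
     (forall a1 a2, kernel R a1 a2 = cokernel R (psi a1) (psi a2)) /\
     (forall b, exists a, cokernel R (psi a) b = one)).
  { intros psi Hpsi.
    assert (HR : forall a b, R a b = cokernel R (psi a) b).
    { intros a b. apply lantisym.
      - rewrite <- (one_otimes (R a b)), <- (Hpsi a). apply H3.
      - apply (ltrans _ (bires (R a (psi a)) (R a b))).
        + apply inf_lb; exists a; reflexivity.
        + rewrite Hpsi. apply (ltrans _ (res one (R a b))). apply meet_le_l. apply res_one_le. }
    split; [exact HR|split].
    - intros a1 a2. unfold kernel at 1.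
      assert (HRf : forall b, R a1 b = cokernel R (psi a1) b /\ R a2 b = cokernel R (psi a2) b)
        by (intro; split; apply HR).
      rewrite <- (inf_bires (cokernel R) Fr Fs Ft).
      f_equal. extensionality v. apply propositional_extensionality.
      split; intros [b ->]; exists b; rewrite !HR; reflexivity.
    - intro b. destruct (H2 b) as [a Ha]. exists a. rewrite <- HR. exact Ha. }
  remember (cokernel R) as F eqn:HF. remember (kernel R) as E eqn:HE.
  destruct (Key psi0 Hpsi0) as [HR0 [HE0 Hs0]].
  destruct (kfacts R E F psi0 Er Fr Fs Ft HR0 HE0 Hs0) as [K1 [K2 [K3 K4]]].
  split.
  - intros [HW HZ].
    destruct (proj1 (core V W R E F psi0 Er Es Et Fr Fs Ft HR0 HE0 Hs0) HW) as [Hev [Hwf _]].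
    split; [|split].
    + split; [|split].
      * intro i. rewrite (sym_inv E Es). split; apply Hev.
      * rewrite <- K2. apply comp_mono; [|apply inv_mono]; exact hRZ.
      * rewrite (sym_inv E Es), <- K2. apply comp_mono; [|apply inv_mono]; exact hRZ.
    + split; [|split].
      * intro i. rewrite (sym_inv F Fs). split; apply Hwf.
      * rewrite <- K1. apply comp_mono; [apply inv_mono|]; exact hRZ.
      * rewrite (sym_inv F Fs), <- K1. apply comp_mono; [apply inv_mono|]; exact hRZ.
    + intros psi Hpsi. destruct (Key psi Hpsi) as [HR [HE1 Hs]].
      destruct (proj1 (core V W R E F psi Er Es Et Fr Fs Ft HR HE1 Hs) HW) as [_ [_ HC]].
      split; [|split].
      * intros c1 c2 Heq. unfold Rtilde in Heq.
        apply (f_equal (@proj1_sig _ _)) in Heq. simpl in Heq.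
        apply quot_eq. rewrite !qrep_spec. apply (row_eq E Es Et).
        rewrite HE1, Heq. apply Fr.
      * intro y. destruct (Hs (qrep y)) as [a Ha]. exists (qclass E a).
        apply quot_eq. unfold Rtilde; simpl. rewrite (qrep_spec F y).
        rewrite <- (move_cls E F psi Er Fs Ft HE1 _ _ (qrep_qclass E a)).
        exact (row_eq F Fs Ft _ _ Ha).
      * intros i c1 c2. unfold qrel, Rtilde.
        rewrite (eve_inv F (W i) Fs (qrep (qclass F (psi (qrep c1)))) (qrep (qclass F (psi (qrep c2))))
                   (psi (qrep c1)) (psi (qrep c2)) (eq_sym (qrep_qclass F _)) (eq_sym (qrep_qclass F _))).
        apply HC.
  - intros [[Hv14 _] [[Hw15 _] Hiso]].
    split; [|exact hRZ].
    apply (proj2 (core V W R E F psi0 Er Es Et Fr Fs Ft HR0 HE0 Hs0)).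
    split; [|split].
    + intro i; apply Hv14.
    + intro i; apply Hw15.
    + intros i a1 a2. destruct (Hiso psi0 Hpsi0) as [_ [_ Hrel]].
      specialize (Hrel i (qclass E a1) (qclass E a2)). unfold qrel, Rtilde in Hrel.
      rewrite (eve_inv E (V i) Es a1 a2 _ _ (qrep_qclass E a1) (qrep_qclass E a2)), Hrel.
      apply (eve_inv F (W i) Fs).
      * rewrite <- (qrep_qclass F). symmetry. apply (move_cls E F psi0 Er Fs Ft HE0). apply qrep_qclass.
      * rewrite <- (qrep_qclass F). symmetry. apply (move_cls E F psi0 Er Fs Ft HE0). apply qrep_qclass.
Qed.
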